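(* With $w_1=\alpha A+bC$, $u=\alpha B+bD$, $w_2=\delta D+cB$, $v=cA+\delta C$ (the entries of $\Omega=\mathsf dT\,T^{-1}$, where $T^{-1}=\begin{pmatrix}A&B\\C&D\end{pmatrix}$), the following hold in $\Gamma$: $w_1u=uw_1-2hu^2$, $w_2u=uw_2$, $w_1v=vw_1+2h(w_1w_2-uv)$, $w_2v=vw_2$, $w_1w_2=-w_2w_1-2huw_2$, $w_1^2=-2huw_1$, $w_2^2=0$, $uv=vu-2huw_2$. Moreover $\mathcal D_h=ad^{-1}-\beta d^{-1}\gamma d^{-1}$ and $\hat{\mathcal D}=bc^{-1}-\alpha c^{-1}\delta c^{-1}$ commute with $w_1,w_2,u,v$.
   Context: Let $h$ be an odd (Grassmann) parameter with $h^2=0$; even elements commute with everything and odd elements anticommute with each other. $\mathcal A$ is the $\mathbb Z_2$-graded algebra generated by even invertible $a,d$ and odd $\beta,\gamma$ ($h$ commuting with $a,d$, anticommuting with $\beta,\gamma$) subject to $a\beta=\beta a$, $a\gamma=\gamma a+h a^2(1-\mathcal D_h^{-1})$, $d\beta=\beta d$, $d\gamma=\gamma d+h d^2(\mathcal D_h-1)$, $\beta^2=0$, $\gamma^2=h\gamma d(1-\mathcal D_h)$, $\beta\gamma=-\gamma\beta+h\beta d(1-\mathcal D_h)$, $ad=da+h\beta d(\mathcal D_h-1)$, with $\mathcal D_h=ad^{-1}-\beta d^{-1}\gamma d^{-1}$; $T=\begin{pmatrix}a&\beta\\ \gamma&d\end{pmatrix}$ and $T^{-1}=\begin{pmatrix}a^{-1}+a^{-1}\beta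 d^{-1}\gamma a^{-1}&-a^{-1}\beta d^{-1}\\ -d^{-1}\gamma a^{-1}& d^{-1}+d^{-1}\gamma a^{-1}\beta d^{-1}\end{pmatrix}$. The differential algebra $\Gamma$ is the $\mathbb Z_2$-graded algebra generated by $\mathcal A$ together with odd elements $\alpha=\mathsf da,\ \delta=\mathsf dd$ and even elements $b=\mathsf d\beta,\ c=\mathsf d\gamma$ ($c$ invertible; $h$ anticommutes with $\alpha,\delta$), where $\mathsf d$ is an odd map with $\mathsf d^2=0$, graded Leibniz rule and $\mathsf dh=-h\mathsf d$, subject to the relations $a\alpha=\alpha a+h(\alpha\beta-ba)$, $ab=ba-hb\beta$, $ac=ca+h(\alpha a-c\beta+\delta a)$, $a\delta=\delta a+h(ba+\delta\beta)$; $\beta\alpha=-\alpha\beta+hb\beta$, $\beta b=b\beta$, $\beta c=c\beta+h(\alpha+\delta)\beta$, $\beta\delta=-\delta\beta-hb\beta$; $\gamma\alpha=-\alpha\gamma+h(\alpha a+\alpha d+b\gamma)$, $\gamma b=b\gamma+hb(a+d)$, $\gamma c=c\gamma+h(\alpha\gamma+ca+cd+\delta\gamma)$, $\gamma\delta=-\delta\gamma+h(\delta a+\delta d-b\gamma)$; $d\alpha=\alpha d-h(\alpha\beta+bd)$, $db=bd+hb\beta$, $dc=cd+h(\alpha d+c\beta+\delta d)$, $d\delta=\delta d+h(bd-\delta\beta)$; and $\alpha b=b\alpha+hb^2$, $\alpha c=c\alpha+h(cb+\delta\alpha)$, $\delta b=b\delta-hb^2$, $\delta c=c\delta-h(cb-\alpha\delta)$,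 $\alpha^2=h\alpha b$, $\alpha\delta=-\delta\alpha+h(\delta-\alpha)b$, $\delta^2=-h\delta b$, $bc=cb+h(\delta+\alpha)b$. *)

(* Defs.v *)
(* Gamma is presented by generators and relations, so an identity
   holds in Gamma iff it holds for every family of elements satisfying the
   defining relations in an arbitrary (unital, associative) K-algebra. *)
From mathcomp Require Import all_boot all_order all_algebra.
Set Implicit Arguments. Unset Strict Implicit. Unset Printing Implicit Defensive.
Import GRing.Theory.
Local Open Scope ring_scope.

Section Gam.
Variables (K : fieldType) (R : unitAlgType K).

Definition Dh (a d be ga : R) : R := a * d^-1 - be * d^-1 * ga * d^-1.
Definition Dhat (al de b c : R) : R := b * c^-1 - al * c^-1 * de * c^-1.

Definition TiA (a d be ga : R) : R := a^-1 + a^-1 * be * d^-1 * ga * a^-1.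
Definition TiB (a d be ga : R) : R := - (a^-1 * be * d^-1).
Definition TiC (a d be ga : R) : R := - (d^-1 * ga * a^-1).
Definition TiD (a d be ga : R) : R := d^-1 + d^-1 * ga * a^-1 * be * d^-1.

Definition w1 (a d be ga al de b c : R) : R :=
  al * TiA a d be ga + b * TiC a d be ga.
Definition uu (a d be ga al de b c : R) : R :=
  al * TiB a d be ga + b * TiD a d be ga.
Definition w2 (a d be ga al de b c : R) : R :=
  de * TiD a d be ga + c * TiB a d be ga.
Definition vv (a d be ga al de b c : R) : R :=
  c * TiA a d be ga + de * TiC a d be ga.

(* The defining relations of Gamma (including those of the algebra A and of
   the Grassmann parameter h), for elements
   h (odd), a d (even, invertible), be ga (odd) = beta gamma,
   al de (odd) = alpha = da, delta = dd, b c (even, c invertible) = d beta, d gamma. *)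
Definition Gamma_rels (h a d be ga al de b c : R) : Prop :=
  let D := Dh a d be ga in
  (
   ( h * h = 0 /\ h * a = a * h /\ h * d = d * h /\ h * be = - (be * h) /\
       h * ga = - (ga * h) /\ h * al = - (al * h) /\ h * de = - (de * h) /\
       h * b = b * h /\ h * c = c * h) /\
   ( a \is a GRing.unit /\ d \is a GRing.unit /\ c \is a GRing.unit /\ D \is a GRing.unit) /\
   ( a * be = be * a /\
       a * ga = ga * a + h * (a * a) * (1 - D^-1) /\
       d * be = be * d /\
       d * ga = ga * d + h * (d * d) * (D - 1) /\
       be * be = 0 /\
       ga * ga = h * ga * d * (1 - D) /\
       be * ga = - (ga * be) + h * be * d * (1 - D) /\
       a * d = d * a + h * be * d * (D - 1)) /\
   ( ( a * al = al * a + h * (al * be - b * a) /\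
           a * b = b * a - h * b * be /\
           a * c = c * a + h * (al * a - c * be + de * a) /\
           a * de = de * a + h * (b * a + de * be)) /\
       ( be * al = - (al * be) + h * b * be /\
           be * b = b * be /\
           be * c = c * be + h * (al + de) * be /\
           be * de = - (de * be) - h * b * be) /\
       ( ga * al = - (al * ga) + h * (al * a + al * d + b * ga) /\
           ga * b = b * ga + h * b * (a + d) /\
           ga * c = c * ga + h * (al * ga + c * a + c * d + de * ga) /\
           ga * de = - (de * ga) + h * (de * a + de * d - b * ga)) /\
       ( d * al = al * d - h * (al * be + b * d) /\
           d * b = b * d + h * b * be /\
           d * c = c * d + h * (al * d + c * be + de * d) /\
           d * de = de * d + h * (b * d - de * be))) /\
   ( al * b = b * al + h * (b * b) /\
       al * c = c * al + h * (c * b + de * al) /\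
       de * b = b * de - h * (b * b) /\
       de * c = c * de - h * (c * b - al * de) /\
       al * al = h * al * b /\
       al * de = - (de * al) + h * (de - al) * b /\
       de * de = - (h * de * b) /\
       b * c = c * b + h * (de + al) * b)).

End Gam.

(* Main.v *)
Require Import Defs.
From mathcomp Require Import all_boot all_order all_algebra.
Import GRing.Theory.
Local Open Scope ring_scope.
Set Implicit Arguments. Unset Strict Implicit.

Definition ncm := seq nat.
Definition ncp := seq (int * ncm).
Definition pscale (c : int) (p : ncp) : ncp := [seq (c * t.1, t.2) | t <- p].
Definition pmul (p q : ncp) : ncp := [seq (t.1 * s.1, t.2 ++ s.2) | t <- p, s <- q].
Fixpoint addt (t : int * ncm) (p : ncp) : ncp :=
  if p is s :: p' then (if s.2 == t.2 then (s.1 + t.1, s.2) :: p' else s :: addt t p') else [:: t].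
Definition collect (p : ncp) : ncp := filter (fun t : int * ncm => t.1 != 0) (foldr addt [::] p).
Fixpoint rw (tbl : nat -> nat -> option ncp) (m : ncm) : option ncp :=
  match m with
  | i :: m' => match m' with
     | j :: m'' => match tbl i j with
                   | Some r => Some (pmul r [:: (1, m'')])
                   | None => omap (pmul [:: (1, [:: i])]) (rw tbl m')
                   end
     | [::] => None end
  | [::] => None end.
Definition psg (i : nat) : int := if i \in [:: 0; 4; 5; 6; 7]%N then -1 else 1.
Definition sgl (u : ncm) : int := foldr (fun i acc => psg i * acc) 1 u.
Definition step (tbl : nat -> nat -> option ncp) (m : ncm) : option ncp :=
  if (1 < count_mem 0%N m)%N then Some [::]
  else if 0%N \in m then
    (if m is O :: m' then omap (fun q => pmul [:: (1, [:: 0%N])] (filter (fun t => 0%N \notin t.2) q)) (rw tbl m')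
     else Some [:: (sgl (take (index 0%N m) m), 0%N :: (take (index 0%N m) m ++ drop (index 0%N m).+1 m))])
  else rw tbl m.
Definition nstep tbl (p : ncp) : ncp :=
  collect (flatten [seq (match step tbl t.2 with Some q => pscale t.1 q | None => [:: t] end) | t <- p]).
Definition nf tbl (n : nat) (p : ncp) := iter n (nstep tbl) p.

Section Sound.
Variable R : pzRingType.
Variable env : seq R.
Definition ev (i : nat) : R := nth 0 env i.
Fixpoint evm (m : ncm) : R := if m is i :: m' then ev i * evm m' else 1.
Fixpoint evp (p : ncp) : R := if p is t :: p' then t.1%:~R * evm t.2 + evp p' else 0.

Lemma evm_cat u v : evm (u ++ v) = evm u * evm v.
Proof. by elim: u => [|i u IH] /=; rewrite ?mul1r // IH mulrA. Qed.
Lemma evp_cat p q : evp (p ++ q) = evp p + evp q.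
Proof. by elim: p => [|t p IH] /=; rewrite ?add0r // IH addrA. Qed.
Lemma evp_scale c p : evp (pscale c p) = c%:~R * evp p.
Proof. by elim: p => [|t p IH] /=; rewrite ?mulr0 // IH mulrDr intrM mulrA. Qed.
Lemma evp_mul p q : evp (pmul p q) = evp p * evp q.
Proof.
elim: p => [|t p IH] /=; first by rewrite mul0r.
rewrite evp_cat IH mulrDl; congr (_ + _).
clear IH; elim: q => [|s q IHq] /=; first by rewrite mulr0.
rewrite IHq mulrDr; congr (_ + _).
rewrite intrM evm_cat -!mulrA; congr (_ * _).
by rewrite !mulrA commr_int.
Qed.
Lemma evp_addt t p : evp (addt t p) = evp (t :: p).
Proof.
elim: p => [|s p IH] //=.
case: eqP => [->|_] /=.
  by rewrite intrD mulrDl addrA (addrC (s.1%:~R * _)).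
by rewrite IH /= !addrA (addrC (s.1%:~R * _)).
Qed.
Lemma evp_collect p : evp (collect p) = evp p.
Proof.
rewrite /collect; have ->: evp p = evp (foldr addt [::] p).
  by elim: p => [|t p IH] //=; rewrite evp_addt /= IH.
elim: (foldr addt [::] p) => [|t q IH] //=.
by case: ifP => [_|/negbFE/eqP ->] /=; rewrite IH // mul0r add0r.
Qed.

Variable tbl : nat -> nat -> option ncp.
Hypothesis tbl_ok : forall i j r, tbl i j = Some r -> ev i * ev j = evp r.
Hypothesis hh : ev 0 * ev 0 = 0.
Hypothesis hcomm : forall i, ev i * ev 0 = (psg i)%:~R * (ev 0 * ev i).

Lemma rw_ok m q : rw tbl m = Some q -> evp q = evm m.
Proof.
elim: m q => [|i m IH] q0 //=.
case: m IH => [|j m''] IH //.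
case E: (tbl i j) => [r|].
  by case=> <-; rewrite evp_mul -(tbl_ok E) /= addr0 mul1r mulrA.
case E2: (rw tbl (j :: m'')) => [q'|] //= [<-].
by rewrite evp_mul (IH _ E2) /= addr0 mul1r mulr1.
Qed.

Lemma hmove u v : evm (u ++ 0%N :: v) = (sgl u)%:~R * evm (0%N :: u ++ v).
Proof.
elim: u => [|i u IH] /=; first by rewrite mul1r.
rewrite IH /= intrM mulrA (commr_int (ev i)) -mulrA (mulrA (ev i)) hcomm.
by rewrite !mulrA (commr_int (sgl u)%:~R).
Qed.

Lemma hzero m : (1 < count_mem 0%N m)%N -> evm m = 0.
Proof.
move=> c2; have m0 : 0%N \in m by rewrite -has_pred1 has_count; apply: leq_trans c2.
have := cat_take_drop (index 0%N m) m.
rewrite (drop_nth 0%N) ?index_mem // nth_index // => Em.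
rewrite -Em hmove.
set v := drop _ _.
have : 0%N \in take (index 0%N m) m ++ v.
  move: c2; rewrite -{1}Em count_cat /= addnCA add1n ltnS => c.
  by rewrite -has_pred1 has_count count_cat.
move=> /[dup] v0.
have := cat_take_drop (index 0%N (take (index 0%N m) m ++ v)) (take (index 0%N m) m ++ v).
rewrite (drop_nth 0%N) ?index_mem // nth_index // => Ev.
rewrite /= -Ev hmove /=; set X := evm _; set s2 := _%:~R; set s1 := _%:~R.
by move=> _; rewrite (mulrA (ev 0) s1) (commr_int (ev 0)) -mulrA (mulrA (ev 0)) hh mul0r !mulr0.
Qed.

Lemma evp1 t : evp [:: t] = t.1%:~R * evm t.2.
Proof. by rewrite /= addr0. Qed.
Lemma hmove' m : 0%N \in m -> evm m = (sgl (take (index 0%N m) m))%:~R *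
   evm (0%N :: (take (index 0%N m) m ++ drop (index 0%N m).+1 m)).
Proof.
move=> m0; have := cat_take_drop (index 0%N m) m.
rewrite (drop_nth 0%N) ?index_mem // nth_index // => E.
by rewrite -hmove E.
Qed.

Lemma step_ok m q : step tbl m = Some q -> evp q = evm m.
Proof.
rewrite /step; case: ifP => [c2 [<-]|c1]; first by rewrite hzero.
case: ifP => [m0|m0]; last exact: rw_ok.
case: m m0 c1 => [|i m] //; case: i => [|i] m0 c1.
  case E: (rw tbl m) => [q'|] //= [<-].
  rewrite evp_mul /= addr0 mul1r mulr1 -(rw_ok E).
  elim: q' {E} => [|t q' IH] //=.
  case: ifP => [_|/negbFE t0] /=; first by rewrite !mulrDr IH.
  rewrite mulrDr IH addrC [X in _ = _ + X]mulrA (commr_int (ev 0)) -mulrA.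
  have -> : ev 0 * evm t.2 = evm (0%N :: t.2) by [].
  rewrite hzero ?mulr0 ?addr0 //= add1n ltnS.
  by rewrite -has_count has_pred1.
by move=> [<-]; rewrite evp1 [in RHS]hmove'.
Qed.

Lemma nstep_ok p : evp (nstep tbl p) = evp p.
Proof.
rewrite /nstep evp_collect.
elim: p => [|t p IH] //=; rewrite evp_cat IH; congr (_ + _).
case E: (step tbl t.2) => [q|] /=; last by rewrite addr0.
by rewrite evp_scale (step_ok E).
Qed.
Lemma nf_ok n p : evp (nf tbl n p) = evp p.
Proof. by elim: n => [|n IH] //=; rewrite nstep_ok. Qed.
End Sound.

Inductive nexp := EV of nat | EC of int | EA of nexp & nexp | EM of nexp & nexp | EN of nexp.
Fixpoint toP e : ncp := match e with
  | EV i => [:: (1%Z, [:: i])] | EC z => [:: (z, [::])]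
  | EA x y => toP x ++ toP y | EM x y => pmul (toP x) (toP y)
  | EN x => pscale (-1)%Z (toP x) end.

Section Dec.
Variable R : pzRingType.
Variable env : seq R.
Fixpoint evE e : R := match e with
  | EV i => ev env i | EC z => z%:~R | EA x y => evE x + evE y
  | EM x y => evE x * evE y | EN x => - evE x end.
Lemma toP_ok e : evp env (toP e) = evE e.
Proof.
elim: e => [i|z|x IHx y IHy|x IHx y IHy|x IHx] /=.
- by rewrite addr0 mul1r mulr1.
- by rewrite addr0 mulr1.
- by rewrite evp_cat IHx IHy.
- by rewrite evp_mul IHx IHy.
- by rewrite evp_scale IHx mulN1r.
Qed.
Lemma ncring_ok e1 e2 : collect (toP e1 ++ pscale (-1)%Z (toP e2)) = [::] -> evE e1 = evE e2.
Proof.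
move=> H; apply/eqP; rewrite -subr_eq0 -toP_ok -toP_ok.
have ->: - evp env (toP e2) = evp env (pscale (-1)%Z (toP e2)) by rewrite evp_scale mulN1r.
rewrite -evp_cat.
by rewrite -(evp_collect env) H.
Qed.
Lemma decide_ok tbl n e1 e2 :
  (forall i j r, tbl i j = Some r -> ev env i * ev env j = evp env r) ->
  ev env 0 * ev env 0 = 0 ->
  (forall i, ev env i * ev env 0 = (psg i)%:~R * (ev env 0 * ev env i)) ->
  nf tbl n (toP e1 ++ pscale (-1)%Z (toP e2)) = [::] -> evE e1 = evE e2.
Proof.
move=> T hh hc H; apply/eqP; rewrite -subr_eq0 -toP_ok -toP_ok.
have ->: - evp env (toP e2) = evp env (pscale (-1)%Z (toP e2)) by rewrite evp_scale mulN1r.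
rewrite -evp_cat.
by rewrite -(nf_ok T hh hc n) H.
Qed.
End Dec.

Ltac find_idx t l n :=
  lazymatch l with
  | t :: _ => constr:(n)
  | _ :: ?l' => find_idx t l' (S n)
  | _ => fail 100 "atom not found" t
  end.

Ltac reify l t :=
  lazymatch t with
  | ?u + ?v => let a := reify l u in let b := reify l v in constr:(EA a b)
  | - ?u => let a := reify l u in constr:(EN a)
  | ?u * ?v => let a := reify l u in let b := reify l v in constr:(EM a b)
  | 0 => constr:(EC 0%Z)
  | 1 => constr:(EC 1%Z)
  | (?n%:R) => constr:(EC (Posz n))
  | (?z%:~R) => constr:(EC z)
  | Dh ?a' ?d' ?b' ?g' => let t' := constr:(a' * d'^-1 - b' * d'^-1 * g' * d'^-1) in reify l t'
  | Dhat ?a' ?d' ?b' ?g' => let t' := constr:(b' * g'^-1 - a' * g'^-1 * d' * g'^-1) in reify l t'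
  | _ => let i := find_idx t l 0%N in constr:(EV i)
  end.

Ltac ncring l :=
  lazymatch goal with |- ?x = ?y =>
    let e1 := reify l x in let e2 := reify l y in
    change (evE l e1 = evE l e2); apply: ncring_ok; vm_compute; reflexivity
  end.


Unset Implicit Arguments.

Definition ent := ((nat * nat) * int * ncp)%type.
Definition ey (e : ent) := e.1.1.1.
Definition ex (e : ent) := e.1.1.2.
Definition es (e : ent) := e.1.2.
Definition eE (e : ent) := e.2.
Definition erev (e : ent) : ent := ((ex e, ey e), es e, pscale (- es e) (eE e)).
Definition ederive (li : nat) (e : ent) : ent :=
  ((ex e, li), es e, pmul [:: (1%Z, [:: li])] (pmul (eE e) [:: (1%Z, [:: li])])).
Definition Eaga1 : ncp := [:: (1%Z, [:: 0 ; 10 ; 10]%N); (-1%Z, [:: 0 ; 10 ; 10 ; 12]%N)].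
Definition Eaga2 : ncp := [:: (1%Z, [:: 0 ; 10 ; 10]%N); (-1%Z, [:: 0 ; 10 ; 10 ; 7 ; 6 ; 11 ; 11]%N); (-1%Z, [:: 0 ; 10 ; 10 ; 8 ; 11]%N)].
Definition base (Eaga : ncp) : seq ent := [:: ((10, 7)%N, 1%Z, [::]);
  ((10, 6)%N, 1%Z, Eaga);
  ((8, 7)%N, 1%Z, [::]);
  ((8, 6)%N, 1%Z, [:: (-1%Z, [:: 0 ; 8 ; 8]%N); (-1%Z, [:: 0 ; 8 ; 8 ; 7 ; 9 ; 6 ; 9]%N); (1%Z, [:: 0 ; 8 ; 8 ; 10 ; 9]%N)]);
  ((7, 6)%N, -1%Z, [:: (1%Z, [:: 0 ; 7 ; 8]%N); (1%Z, [:: 0 ; 7 ; 8 ; 7 ; 9 ; 6 ; 9]%N); (-1%Z, [:: 0 ; 7 ; 8 ; 10 ; 9]%N)]);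
  ((10, 8)%N, 1%Z, [:: (-1%Z, [:: 0 ; 7 ; 8]%N); (-1%Z, [:: 0 ; 7 ; 8 ; 7 ; 9 ; 6 ; 9]%N); (1%Z, [:: 0 ; 7 ; 8 ; 10 ; 9]%N)]);
  ((10, 5)%N, 1%Z, [:: (-1%Z, [:: 0 ; 3 ; 10]%N); (1%Z, [:: 0 ; 5 ; 7]%N)]);
  ((10, 3)%N, 1%Z, [:: (-1%Z, [:: 0 ; 3 ; 7]%N)]);
  ((10, 1)%N, 1%Z, [:: (-1%Z, [:: 0 ; 1 ; 7]%N); (1%Z, [:: 0 ; 4 ; 10]%N); (1%Z, [:: 0 ; 5 ; 10]%N)]);
  ((10, 4)%N, 1%Z, [:: (1%Z, [:: 0 ; 3 ; 10]%N); (1%Z, [:: 0 ; 4 ; 7]%N)]);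
  ((7, 5)%N, -1%Z, [:: (1%Z, [:: 0 ; 3 ; 7]%N)]);
  ((7, 3)%N, 1%Z, [::]);
  ((7, 1)%N, 1%Z, [:: (1%Z, [:: 0 ; 4 ; 7]%N); (1%Z, [:: 0 ; 5 ; 7]%N)]);
  ((7, 4)%N, -1%Z, [:: (-1%Z, [:: 0 ; 3 ; 7]%N)]);
  ((6, 5)%N, -1%Z, [:: (1%Z, [:: 0 ; 3 ; 6]%N); (1%Z, [:: 0 ; 5 ; 8]%N); (1%Z, [:: 0 ; 5 ; 10]%N)]);
  ((6, 3)%N, 1%Z, [:: (1%Z, [:: 0 ; 3 ; 8]%N); (1%Z, [:: 0 ; 3 ; 10]%N)]);
  ((6, 1)%N, 1%Z, [:: (1%Z, [:: 0 ; 1 ; 8]%N); (1%Z, [:: 0 ; 1 ; 10]%N); (1%Z, [:: 0 ; 4 ; 6]%N); (1%Z, [:: 0 ; 5 ; 6]%N)]);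
  ((6, 4)%N, -1%Z, [:: (-1%Z, [:: 0 ; 3 ; 6]%N); (1%Z, [:: 0 ; 4 ; 8]%N); (1%Z, [:: 0 ; 4 ; 10]%N)]);
  ((8, 5)%N, 1%Z, [:: (-1%Z, [:: 0 ; 3 ; 8]%N); (-1%Z, [:: 0 ; 5 ; 7]%N)]);
  ((8, 3)%N, 1%Z, [:: (1%Z, [:: 0 ; 3 ; 7]%N)]);
  ((8, 1)%N, 1%Z, [:: (1%Z, [:: 0 ; 1 ; 7]%N); (1%Z, [:: 0 ; 4 ; 8]%N); (1%Z, [:: 0 ; 5 ; 8]%N)]);
  ((8, 4)%N, 1%Z, [:: (1%Z, [:: 0 ; 3 ; 8]%N); (-1%Z, [:: 0 ; 4 ; 7]%N)]);
  ((5, 3)%N, 1%Z, [:: (1%Z, [:: 0 ; 3 ; 3]%N)]);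
  ((5, 1)%N, 1%Z, [:: (1%Z, [:: 0 ; 1 ; 3]%N); (1%Z, [:: 0 ; 4 ; 5]%N)]);
  ((4, 3)%N, 1%Z, [:: (-1%Z, [:: 0 ; 3 ; 3]%N)]);
  ((4, 1)%N, 1%Z, [:: (-1%Z, [:: 0 ; 1 ; 3]%N); (1%Z, [:: 0 ; 5 ; 4]%N)]);
  ((5, 4)%N, -1%Z, [:: (1%Z, [:: 0 ; 4 ; 3]%N); (-1%Z, [:: 0 ; 5 ; 3]%N)]);
  ((3, 1)%N, 1%Z, [:: (1%Z, [:: 0 ; 4 ; 3]%N); (1%Z, [:: 0 ; 5 ; 3]%N)])].
Definition GAGA : ncp := [:: (1%Z, [:: 0 ; 6 ; 8]%N); (1%Z, [:: 0 ; 6 ; 8 ; 7 ; 9 ; 6 ; 9]%N); (-1%Z, [:: 0 ; 6 ; 8 ; 10 ; 9]%N)].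
Definition ALAL : ncp := [:: (1%Z, [:: 0 ; 5 ; 3]%N)].
Definition DEDE : ncp := [:: (-1%Z, [:: 0 ; 4 ; 3]%N)].
Definition invp : seq (nat * nat) := [:: (10, 11); (8, 9); (1, 2)]%N.
Definition invl : seq nat := [:: 11; 9; 2]%N.
Definition full0 Eaga := base Eaga ++ map erev (base Eaga).
Definition der1 Eaga := flatten [seq [seq ederive p.2 e | e <- full0 Eaga & ey e == p.1] | p <- invp].
Definition der1r Eaga := der1 Eaga ++ map erev (der1 Eaga).
Definition der2 Eaga := flatten [seq [seq ederive p.2 e | e <- der1r Eaga &
   (ey e == p.1) && (ex e \in invl) && (ex e != p.2)] | p <- invp].
Definition alls Eaga := full0 Eaga ++ der1r Eaga ++ der2 Eaga ++ map erev (der2 Eaga).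
Definition cancels : seq (nat * nat) := [:: (10, 11); (11, 10); (8, 9); (9, 8); (1, 2); (2, 1)]%N.
Definition sq (i : nat) : option ncp :=
  match i with 7 => Some [::] | 6 => Some GAGA | 5 => Some ALAL | 4 => Some DEDE | _ => None end%N.
Definition dflt : ent := ((0%N, 0%N), 0%Z, [::]).
Definition tblL (L : seq ent) (i j : nat) : option ncp :=
  if (i, j) \in cancels then Some [:: (1%Z, [::])]
  else if i == j then sq i
  else if (j < i)%N then
    (let k := find (fun e => (ey e == i) && (ex e == j)) L in
     if (k < size L)%N then (let e := nth dflt L k in Some ((es e, [:: j; i]) :: eE e)) else None)
  else None.
Definition tbl1 := tblL (alls Eaga1).
Definition tbl2 := tblL (alls Eaga2).

Section Snd.
Variable R : pzRingType.
Variable L : seq R.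
Definition sound (e : ent) := ((es e == 1) || (es e == -1)) /\
  ev L (ey e) * ev L (ex e) = (es e)%:~R * (ev L (ex e) * ev L (ey e)) + evp L (eE e).

Lemma ssq (s : int) : (s == 1) || (s == -1) -> (s * s)%:~R = 1 :> R.
Proof. by case/orP=> /eqP ->. Qed.

Lemma erev_ok e : sound e -> sound (erev e).
Proof.
case=> hs E; split=> //=.
rewrite evp_scale E mulrDr mulrA -intrM ssq // mul1r intrN mulNr addrK //.
Qed.

Lemma evp_li li : evp L [:: (1%Z, [:: li])] = ev L li.
Proof. by rewrite /= mulr1 addr0 mul1r. Qed.

Lemma ederive_ok l li e : ev L l * ev L li = 1 -> ev L li * ev L l = 1 -> ey e = l ->
  sound e -> sound (ederive li e).
Proof.
move=> i1 i2 ye [hs E]; split=> //=.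
rewrite !evp_mul !evp_li.
have -> : ev L (ex e) * ev L li = ev L li * (ev L l * ev L (ex e)) * ev L li.
  by rewrite mulrA i2 mul1r.
rewrite -ye E mulrDr mulrDl; congr (_ + _); last by rewrite mulrA.
by rewrite mulrA (commr_int (ev L li)) -!mulrA ye i1 mulr1.
Qed.

Lemma alls_ok Eaga : (forall e, e \in base Eaga -> sound e) ->
  (forall p, p \in invp -> ev L p.1 * ev L p.2 = 1 /\ ev L p.2 * ev L p.1 = 1) ->
  forall e, e \in alls Eaga -> sound e.
Proof.
move=> B I.
have F0 : forall e, e \in full0 Eaga -> sound e.
  move=> e; rewrite /full0 mem_cat => /orP[/B //|/mapP[e2 /B He ->]]; exact: (@erev_ok e2 He).
have D1 : forall e, e \in der1 Eaga -> sound e.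
  move=> e; rewrite /der1 => /flatten_mapP[p /I [i1 i2]] /mapP[e2 ].
  rewrite mem_filter => /andP[/eqP ye /F0 He] ->; exact: (@ederive_ok p.1 p.2 e2 i1 i2 ye He).
have D1r : forall e, e \in der1r Eaga -> sound e.
  move=> e; rewrite /der1r mem_cat => /orP[/D1 //|/mapP[e2 /D1 He ->]]; exact: (@erev_ok e2 He).
have D2 : forall e, e \in der2 Eaga -> sound e.
  move=> e; rewrite /der2 => /flatten_mapP[p /I [i1 i2]] /mapP[e2 ].
  rewrite mem_filter => /andP[/andP[/andP[/eqP ye _] _] He].
  have {He}He := D1r _ He.
  move=> ->; exact: (@ederive_ok p.1 p.2 e2 i1 i2 ye He).
move=> e; rewrite /alls mem_cat => /orP[/F0 //|].
rewrite mem_cat => /orP[/D1r //|]; rewrite mem_cat => /orP[/D2 //|/mapP[e2 He ->]].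
have {He}He := D2 _ He.
exact: (@erev_ok e2 He).
Qed.

Lemma tblL_ok (Ls : seq ent) : (forall e, e \in Ls -> sound e) ->
  (forall p, p \in cancels -> ev L p.1 * ev L p.2 = 1) ->
  (forall i r, sq i = Some r -> ev L i * ev L i = evp L r) ->
  forall i j r, tblL Ls i j = Some r -> ev L i * ev L j = evp L r.
Proof.
move=> S C Q i j r; rewrite /tblL.
case: ifP => [/C /= -> [<-]|_]; first by rewrite /= mulr1 addr0.
case: eqP => [-> /Q //|_].
case: ifP => // _.
set k := find _ _; case: ifP => // kl [<-].
have [_ Se] := S _ (mem_nth dflt kl).
have := @nth_find _ dflt (fun e => (ey e == i) && (ex e == j)) Ls.
rewrite has_find => /(_ kl) /andP[/eqP Ey /eqP Ex].
move: Se; rewrite /k Ey Ex => ->; by rewrite /= mulr1.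
Qed.
End Snd.


Ltac ncr l :=
  lazymatch goal with |- ?x = ?y =>
    let l' := eval unfold l in l in
    let e1 := reify l' x in let e2 := reify l' y in
    change (evE l e1 = evE l e2); apply: ncring_ok; vm_compute; reflexivity
  end.
Ltac dec l T hh hc :=
  lazymatch goal with |- ?x = ?y =>
    let l' := eval unfold l in l in
    let e1 := reify l' x in let e2 := reify l' y in
    change (evE l e1 = evE l e2); apply: (decide_ok (n := 300%N) T hh hc); vm_compute; reflexivity
  end.

Arguments sound {R} L e.
Section G.
Variables (K : fieldType) (R : unitAlgType K) (h a d be ga al de b c : R).
Hypothesis HG : Gamma_rels h a d be ga al de b c.
Definition envG := [:: h; c; c^-1; b; de; al; ga; be; d; d^-1; a; a^-1; (Dh a d be ga)^-1].
Definition env2 := [:: h; c; c^-1; b; de; al; ga; be; d; d^-1; a; a^-1].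

Ltac dG := move: HG => [[hh0 [ha [hd [hbe [hga [hal [hde [hb hc]]]]]]]] [[ua [ud [uc uD]]] [[A1 [A2 [A3 [A4 [A5 [A6 [A7 A8]]]]]]] [[[ra1 [ra2 [ra3 ra4]]] [[rb1 [rb2 [rb3 rb4]]] [[rg1 [rg2 [rg3 rg4]]] [rd1 [rd2 [rd3 rd4]]]]]] [q1 [q2 [q3 [q4 [q5 [q6 [q7 q8]]]]]]]]]]].

Lemma hcomm2 i : ev env2 i * ev env2 0 = (psg i)%:~R * (ev env2 0 * ev env2 i).
Proof.
dG.
have hci : h * c^-1 = c^-1 * h by apply: GRing.commrV.
have hdi : h * d^-1 = d^-1 * h by apply: GRing.commrV.
have hai : h * a^-1 = a^-1 * h by apply: GRing.commrV.
case: i => [|[|[|[|[|[|[|[|[|[|[|[|i]]]]]]]]]]]] /=.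
- by rewrite hh0 mulr0.
- rewrite [in RHS]hc; ncr env2.
- rewrite [in RHS]hci; ncr env2.
- rewrite [in RHS]hb; ncr env2.
- rewrite [in RHS]hde; ncr env2.
- rewrite [in RHS]hal; ncr env2.
- rewrite [in RHS]hga; ncr env2.
- rewrite [in RHS]hbe; ncr env2.
- rewrite [in RHS]hd; ncr env2.
- rewrite [in RHS]hdi; ncr env2.
- rewrite [in RHS]ha; ncr env2.
- rewrite [in RHS]hai; ncr env2.
- by rewrite /ev /= !nth_nil mul0r !mulr0.
Qed.

Lemma hh2 : ev env2 0 * ev env2 0 = 0.
Proof. by dG. Qed.

Lemma empty_ok : forall i j r, (fun _ _ => None) i j = Some r -> ev env2 i * ev env2 j = evp env2 r.
Proof. by []. Qed.

Lemma hD : h * Dh a d be ga = Dh a d be ga * h.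
Proof. dec env2 empty_ok hh2 hcomm2. Qed.

Lemma hcommG i : ev envG i * ev envG 0 = (psg i)%:~R * (ev envG 0 * ev envG i).
Proof.
case: i => [|[|[|[|[|[|[|[|[|[|[|[|[|i]]]]]]]]]]]]]; try (match goal with |- ev _ ?k * _ = _ => exact: (hcomm2 k) end).
- have hDi : h * (Dh a d be ga)^-1 = (Dh a d be ga)^-1 * h by apply: GRing.commrV; exact: hD.
  rewrite /= [in RHS]hDi; ncr envG.
- by rewrite /ev /= !nth_nil mul0r !mulr0.
Qed.

Lemma hhG : ev envG 0 * ev envG 0 = 0.
Proof. by dG. Qed.

Ltac bent H := split; [by [] | rewrite /= [LHS]H; ncr envG].

Definition aga (Eaga : ncp) : ent := ((10, 6)%N, 1%Z, Eaga).

Lemma base_ok Eaga : sound envG (aga Eaga) -> forall e, e \in base Eaga -> sound envG e.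
Proof.
dG => HE e; rewrite /base !inE.
  case/orP => [/eqP -> |]; first bent A1.
  case/orP => [/eqP -> //|].
  case/orP => [/eqP -> |]; first bent A3.
  case/orP => [/eqP -> |]; first bent A4.
  case/orP => [/eqP -> |]; first bent A7.
  case/orP => [/eqP -> |]; first bent A8.
  case/orP => [/eqP -> |]; first bent ra1.
  case/orP => [/eqP -> |]; first bent ra2.
  case/orP => [/eqP -> |]; first bent ra3.
  case/orP => [/eqP -> |]; first bent ra4.
  case/orP => [/eqP -> |]; first bent rb1.
  case/orP => [/eqP -> |]; first bent rb2.
  case/orP => [/eqP -> |]; first bent rb3.
  case/orP => [/eqP -> |]; first bent rb4.
  case/orP => [/eqP -> |]; first bent rg1.
  case/orP => [/eqP -> |]; first bent rg2.
  case/orP => [/eqP -> |]; first bent rg3.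
  case/orP => [/eqP -> |]; first bent rg4.
  case/orP => [/eqP -> |]; first bent rd1.
  case/orP => [/eqP -> |]; first bent rd2.
  case/orP => [/eqP -> |]; first bent rd3.
  case/orP => [/eqP -> |]; first bent rd4.
  case/orP => [/eqP -> |]; first bent q1.
  case/orP => [/eqP -> |]; first bent q2.
  case/orP => [/eqP -> |]; first bent q3.
  case/orP => [/eqP -> |]; first bent q4.
  case/orP => [/eqP -> |]; first bent q6.
  move/eqP => ->; bent q8.

Qed.

Lemma sq_ok : forall i r, sq i = Some r -> ev envG i * ev envG i = evp envG r.
Proof.
dG; case=> [|[|[|[|[|[|[|[|i]]]]]]]] // r [<-] /=.
- rewrite [LHS]q7; ncr envG.
- rewrite [LHS]q5; ncr envG.
- rewrite [LHS]A6; ncr envG.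
- rewrite [LHS]A5; ncr envG.
Qed.

Lemma canc_ok : forall p, p \in cancels -> ev envG p.1 * ev envG p.2 = 1.
Proof.
dG => p; rewrite !inE.
repeat (case/orP => [/eqP -> /=|]; first by rewrite ?mulrV ?mulVr).
move/eqP => -> /=; by rewrite ?mulrV ?mulVr.
Qed.

Lemma invp_ok : forall p, p \in invp -> ev envG p.1 * ev envG p.2 = 1 /\ ev envG p.2 * ev envG p.1 = 1.
Proof.
dG => p; rewrite !inE.
repeat (case/orP => [/eqP -> /=|]; first by rewrite ?mulrV ?mulVr).
move/eqP => -> /=; by rewrite ?mulrV ?mulVr.
Qed.

Lemma T1 : forall i j r, tbl1 i j = Some r -> ev envG i * ev envG j = evp envG r.
Proof.
apply: tblL_ok canc_ok sq_ok; apply: alls_ok invp_ok; apply: base_ok.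
dG; split=> //=; rewrite [LHS]A2; ncr envG.
Qed.

Lemma hDF : h * (d * a^-1 + be * ga * a^-1 * a^-1) * Dh a d be ga = h.
Proof. dec envG T1 hhG hcommG. Qed.

Lemma hDi : h * (Dh a d be ga)^-1 = h * (d * a^-1 + be * ga * a^-1 * a^-1).
Proof.
dG; by rewrite -[in LHS]hDF -mulrA mulrV // mulr1.
Qed.

Lemma T2 : forall i j r, tbl2 i j = Some r -> ev envG i * ev envG j = evp envG r.
Proof.
apply: tblL_ok canc_ok sq_ok; apply: alls_ok invp_ok; apply: base_ok.
have ha2 : h * (a * a) = a * a * h.
  by dG; rewrite mulrA ha -mulrA ha mulrA.
have E : h * (a * a) * (Dh a d be ga)^-1 = h * (a * a) * (d * a^-1 + be * ga * a^-1 * a^-1).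
  by rewrite ha2 -[LHS]mulrA hDi mulrA.
dG; split=> //=; rewrite [LHS]A2 mulrBr mulr1 E; ncr envG.
Qed.
End G.


Ltac decG l T hh hc :=
  lazymatch goal with |- ?x = ?y =>
    let l' := eval cbv beta delta [envG] in l in
    let e1 := reify l' x in let e2 := reify l' y in
    change (evE l e1 = evE l e2); apply: (decide_ok (n := 300%N) T hh hc); vm_compute; reflexivity
  end.

Theorem mainTheorem9 (K : fieldType) (R : unitAlgType K)
  (h a d be ga al de b c : R) :
  Gamma_rels h a d be ga al de b c ->
  let W1 := w1 a d be ga al de b c in
  let U := uu a d be ga al de b c in
  let W2 := w2 a d be ga al de b c in
  let V := vv a d be ga al de b c in
  let D := Dh a d be ga in
  let Dt := Dhat al de b c in
  ( W1 * U = U * W1 - 2%:R * h * (U * U) /\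
      W2 * U = U * W2 /\
      W1 * V = V * W1 + 2%:R * h * (W1 * W2 - U * V) /\
      W2 * V = V * W2 /\
      W1 * W2 = - (W2 * W1) - 2%:R * h * U * W2 /\
      W1 * W1 = - (2%:R * h * U * W1) /\
      W2 * W2 = 0 /\
      U * V = V * U - 2%:R * h * U * W2)
  /\ ( ( D * W1 = W1 * D /\ D * W2 = W2 * D /\ D * U = U * D /\ D * V = V * D) /\
         ( Dt * W1 = W1 * Dt /\ Dt * W2 = W2 * Dt /\ Dt * U = U * Dt /\ Dt * V = V * Dt)).
Proof.
move=> HG; cbv zeta.
have T := @T2 K R h a d be ga al de b c HG; have hh := @hhG K R h a d be ga al de b c HG; have hc := @hcommG K R h a d be ga al de b c HG.
rewrite /w1 /uu /w2 /vv /TiA /TiB /TiC /TiD.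
split; [|split]; repeat split; decG (@envG K R h a d be ga al de b c) T hh hc.
Qed.
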